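(* Let $Z'$ be a Markov chain with transition matrix $\mathbf P_{Z'}$ on a finite state space $\mathbb E'=\{-\infty\}\cup\mathbb E$, $\mathbb E=\{\mathbf e_1,\ldots,\mathbf e_M\}$, having two absorbing states $-\infty$ and $\mathbf e_M$. Let $\mathbf P_Z$ be the substochastic $M\times M$ matrix obtained from $\mathbf P_{Z'}$ by deleting the row and column of $-\infty$. Fix a partial order $\preceq$ on $\mathbb E$ in which $\mathbf e_M$ is the unique maximal element, let $\mathbf C(\mathbf e,\mathbf e')=\mathbf 1(\mathbf e\preceq\mathbf e')$, and define $\mathbf P_X=\mathbf C\,\mathbf P_Z^T\,\mathbf C^{-1}$. Then every row of $\mathbf P_X$ sums to $1$, i.e. $\sum_{\mathbf e_2\in\mathbb E}\mathbf P_X(\mathbf e,\mathbf e_2)=1$ for all $\mathbf e\in\mathbb E$. Moreover, if there exists $\pi:\mathbb E\to\mathbb R$ with $\sum_{\mathbf e\in\mathbb E}\pi(\mathbf e)=1$ and $\lim_{n\to\infty}\mathbf P_X^n(\mathbf e_2,\mathbf e)=\pi(\mathbf e)$ for all $\mathbf e,\mathbf e_2\in\mathbb E$, then for every $\mathbf e'\in\mathbb E$, $$P(\tau_{\mathbf e_M}<\tau_{-\infty}\mid Z'_0=\mathbf e')=\pi(\{\mathbf e'\}^{\downarrow}),$$ where $\tau_{\mathbf e}=\inf\{n\ge0:Z'_n=\mathbf e\}$.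
   Context: $\mathbf C$ is invertible (it is triangular w.r.t. a linear extension with unit diagonal); its inverse is the Möbius function $\mu$ of the order. For $A\subseteq\mathbb E$, $\pi(A)=\sum_{\mathbf e\in A}\pi(\mathbf e)$, and $\{\mathbf e\}^{\downarrow}=\{\mathbf e'\in\mathbb E:\mathbf e'\preceq\mathbf e\}$. The matrix $\mathbf P_X$ may have negative entries; no nonnegativity is assumed. *)

(* Defs.v *)
From HB Require Import structures.
From mathcomp Require Import all_boot all_order all_algebra.
Set Implicit Arguments. Unset Strict Implicit. Unset Printing Implicit Defensive.
Import Order.TTheory GRing.Theory Num.Theory.
Local Open Scope ring_scope.

Definition seq_lim (R : realFieldType) (u : nat -> R) (l : R) : Prop :=
  forall eps : R, 0 < eps -> exists N : nat, forall k : nat, (N <= k)%N -> `|u k - l| < eps.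

(* probability of the path x = x_0, x_1, ..., x_k (w = [:: x_1; ...; x_k])
   for a chain with transition kernel P started at x *)
Definition path_prob (R : realFieldType) (S : finType) (P : S -> S -> R)
    (x : S) (w : seq S) : R :=
  \prod_(p <- zip (x :: w) w) P p.1 p.2.

(* P(tau_a = k and tau_b > k | Z_0 = x), where tau_y = inf{n >= 0 : Z_n = y}:
   sum of the probabilities of the paths x_0 = x, ..., x_k with x_k = a and
   x_i not in {a, b} for i < k *)
Definition hit_at (R : realFieldType) (S : finType) (P : S -> S -> R)
    (a b x : S) (k : nat) : R :=
  \sum_(w : k.-tuple S | (last x w == a) &&
                         all (fun y => (y != a) && (y != b)) (belast x w))
     path_prob P x w.

(* P(tau_a < tau_b | Z_0 = x) = sum_{k >= 0} P(tau_a = k, tau_b > k | Z_0 = x);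
   "hit_before P a b x p" means this probability equals p *)
Definition hit_before (R : realFieldType) (S : finType) (P : S -> S -> R)
    (a b x : S) (p : R) : Prop :=
  seq_lim (fun N => \sum_(k < N) hit_at P a b x k) p.

(* E' = option 'I_n.+1, with None = -infinity and Some e for e in E *)
Definition PZ_of (R : realFieldType) (n : nat)
    (P' : option 'I_n.+1 -> option 'I_n.+1 -> R) : 'M[R]_n.+1 :=
  \matrix_(i, j) P' (Some i) (Some j).

Definition Cmx (R : realFieldType) (n : nat) (le : rel 'I_n.+1) : 'M[R]_n.+1 :=
  \matrix_(i, j) (le i j)%:R.

Definition PX_of (R : realFieldType) (n : nat) (le : rel 'I_n.+1)
    (P' : option 'I_n.+1 -> option 'I_n.+1 -> R) : 'M[R]_n.+1 :=
  Cmx R le *m (PZ_of P')^T *m invmx (Cmx R le).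

(* Main.v *)
Require Import Defs.
From HB Require Import structures.
From mathcomp Require Import all_boot all_order all_algebra.
From mathcomp Require Import lra.
Set Implicit Arguments. Unset Strict Implicit. Unset Printing Implicit Defensive.
Import Order.TTheory GRing.Theory Num.Theory.
Local Open Scope ring_scope.
Lemma seq_lim_ext (R : realFieldType) (u v : nat -> R) a b :
  seq_lim u a -> (forall k, u k = v k) -> a = b -> seq_lim v b.
Proof. by move=> h e <- eps /h [N HN]; exists N => k /HN; rewrite e. Qed.

Lemma seq_lim_const (R : realFieldType) (c : R) : seq_lim (fun _ => c) c.
Proof. by move=> eps he; exists 0%N => k _; rewrite subrr normr0. Qed.

Lemma seq_lim_add (R : realFieldType) (u v : nat -> R) a b :
  seq_lim u a -> seq_lim v b -> seq_lim (fun k => u k + v k) (a + b).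
Proof.
move=> hu hv eps he.
have e2 : 0 < eps / 2 by lra.
case: (hu _ e2) => N1 H1; case: (hv _ e2) => N2 H2.
exists (maxn N1 N2) => k hk.
have k1 : (N1 <= k)%N by apply: leq_trans hk; apply: leq_maxl.
have k2 : (N2 <= k)%N by apply: leq_trans hk; apply: leq_maxr.
have := H1 _ k1; have := H2 _ k2.
have := ler_normD (u k - a) (v k - b).
have -> : u k + v k - (a + b) = (u k - a) + (v k - b) by rewrite addrACA opprD.
lra.
Qed.

Lemma seq_lim_scale (R : realFieldType) (u : nat -> R) a c :
  seq_lim u a -> seq_lim (fun k => c * u k) (c * a).
Proof.
move=> hu; case: (eqVneq c 0) => [->|cn0].
  by apply: (seq_lim_ext (seq_lim_const 0)) => [k|]; rewrite mul0r.
move=> eps he.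
have hc : 0 < `|c| by rewrite normr_gt0.
case: (hu (eps / `|c|)); first by rewrite divr_gt0.
move=> N HN; exists N => k /HN h.
rewrite -mulrBr normrM.
by rewrite -(ltr_pM2l hc) mulrCA divff ?mulr1 ?gt_eqF // in h.
Qed.

Lemma seq_lim_sum (R : realFieldType) (I : finType) (u : I -> nat -> R) l :
  (forall i, seq_lim (u i) (l i)) ->
  seq_lim (fun k => \sum_i u i k) (\sum_i l i).
Proof.
move=> h.
suff: forall r : seq I, seq_lim (fun k => \sum_(i <- r) u i k) (\sum_(i <- r) l i) by [].
elim=> [|i r IH].
  by apply: (seq_lim_ext (seq_lim_const 0)) => [k|]; rewrite big_nil.
by apply: (seq_lim_ext (seq_lim_add (h i) IH)) => [k|]; rewrite big_cons.
Qed.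
Lemma sum_tupleS (R : realFieldType) (S : finType) k (F : k.+1.-tuple S -> R) :
  \sum_(w : k.+1.-tuple S) F w = \sum_(y : S) \sum_(w : k.-tuple S) F [tuple of y :: w].
Proof.
rewrite pair_big /=.
pose h := fun p : S * k.-tuple S => [tuple of p.1 :: p.2].
rewrite (reindex h) //=.
exists (fun w : k.+1.-tuple S => (thead w, [tuple of behead w])) => [[x t] _|w _].
  by congr pair; apply: val_inj.
by case/tupleP: w => x t; apply: val_inj.
Qed.

Lemma sum_tuple0 (R : realFieldType) (S : finType) (F : 0.-tuple S -> R) :
  \sum_(w : 0.-tuple S) F w = F [tuple].
Proof.
rewrite (bigD1 [tuple]) //= big1 ?addr0 // => t.
by rewrite (tuple0 t) => /negP.
Qed.

Lemma hit_at0 (R : realFieldType) (S : finType) (P : S -> S -> R) a b x :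
  hit_at P a b x 0 = (x == a)%:R.
Proof.
rewrite /hit_at big_mkcond sum_tuple0 /= /path_prob /= big_nil.
by case: (x == a).
Qed.

Lemma hit_atS (R : realFieldType) (S : finType) (P : S -> S -> R) a b x k :
  hit_at P a b x k.+1 =
  ((x != a) && (x != b))%:R * \sum_y P x y * hit_at P a b y k.
Proof.
rewrite /hit_at big_mkcond sum_tupleS big_distrr; apply: eq_bigr => y _.
rewrite /= mulrA [_%:R * _]mulrC -mulrA !big_distrr [X in _ = X]big_mkcond.
apply: eq_bigr => w _.
rewrite /path_prob /= big_cons /=.
case: (x != a) (x != b) => [] [] /=; rewrite ?mul0r ?mul1r ?andbF //;
  by case: ifP; rewrite ?mulr0.
Qed.
Lemma sum_option (R : realFieldType) (T : finType) (F : option T -> R) :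
  \sum_(y : option T) F y = F None + \sum_x F (Some x).
Proof.
rewrite (bigD1 None) //=; congr (_ + _).
rewrite (reindex_omap Some id) => [|[x|] //].
by apply: eq_bigl => x; rewrite eqxx.
Qed.
Section Main.
Variables (R : realFieldType) (n : nat)
  (P' : option 'I_n.+1 -> option 'I_n.+1 -> R) (eM : 'I_n.+1)
  (le : rel 'I_n.+1).
Hypotheses (P'_nonneg : forall x y, 0 <= P' x y)
  (P'_stoch : forall x, \sum_y P' x y = 1)
  (absorb_inf : P' None None = 1)
  (absorb_eM : P' (Some eM) (Some eM) = 1)
  (le_refl : forall e, le e e)
  (le_anti : forall e f, le e f -> le f e -> e = f)
  (le_trans : forall e f g, le e f -> le f g -> le e g)
  (eM_max : forall e, le eM e -> e = eM)
  (eM_unique_max : forall m, (forall e, le m e -> e = m) -> m = eM).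

Lemma row_abs x : P' x x = 1 -> forall y, P' x y = (y == x)%:R.
Proof.
move=> hx y; case: (eqVneq y x) => [->|ne]; first by rewrite hx.
have h := P'_stoch x; rewrite (bigD1 x) //= hx in h.
have h0 : \sum_(i | i != x) P' x i = 0.
  by move: h; rewrite -[RHS]addr0 => /addrI.
exact: (psumr_eq0P (fun i _ => P'_nonneg x i) h0).
Qed.

Lemma le_eM e : le e eM.
Proof.
case: (@arg_minnP _ e (fun j => le e j) (fun j => #|[set k | le j k]|)) => //.
move=> j hej hmin.
suff jE : j = eM by rewrite -jE.
apply: eM_unique_max => k hjk.
apply/eqP/negPn/negP => nkj.
have := hmin k (le_trans hej hjk).
rewrite leqNgt => /negP; apply; apply: proper_card; apply/properP; split.
  by apply/subsetP => z; rewrite !inE => hkz; apply: le_trans hjk hkz.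
exists j; first by rewrite inE.
rewrite inE; apply/negP => hkj; move/negP: nkj; apply; apply/eqP.
exact: le_anti.
Qed.

Let C := Cmx R le.

Lemma kerC (u : 'rV[R]_n.+1) : u *m C = 0 -> u = 0.
Proof.
move=> hu.
suff H : forall m i, (#|[set k | le k i]| <= m)%N -> u 0 i = 0.
  by apply/rowP => i; rewrite mxE (H _ i (leqnn _)).
elim=> [|m IH] i hi.
  by move: hi; rewrite leqn0 => /eqP/cards0_eq/setP/(_ i); rewrite !inE le_refl.
have := congr1 (fun A : 'M[R]_(1, n.+1) => A 0 i) hu; rewrite /C /Cmx !mxE (bigD1 i) //= mxE le_refl mulr1.
rewrite big1 ?addr0 // => k nki; rewrite mxE.
case hki: (le k i); last by rewrite mulr0.
rewrite (IH k) ?mul0r //.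
rewrite -ltnS; apply: leq_trans hi; apply: proper_card; apply/properP; split.
  by apply/subsetP => z; rewrite !inE => hzk; apply: le_trans hzk hki.
exists i; first by rewrite inE.
rewrite inE; apply/negP => hik; move/negP: nki; apply; apply/eqP.
exact: le_anti.
Qed.

Lemma C_unit : C \in unitmx.
Proof.
rewrite -row_free_unit -kermx_eq0; apply/eqP/row_matrixP => i.
rewrite row0; apply: kerC; apply/sub_kermxP; exact: row_sub.
Qed.


Let PZ := PZ_of P'.
Let PX := PX_of le P'.
Let uM : 'cV[R]_n.+1 := \col_i (i == eM)%:R.
Let one : 'cV[R]_n.+1 := const_mx 1.

Lemma CuM : C *m uM = one.
Proof.
apply/colP => i; rewrite /C /Cmx /uM /one !mxE (bigD1 eM) //= !mxE eqxx le_eM.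
rewrite mulr1 big1 ?addr0 // => j nj; rewrite !mxE (negbTE nj) mulr0 //.
Qed.

Lemma invC_one : invmx C *m one = uM.
Proof. by rewrite -CuM mulKmx // C_unit. Qed.

Lemma PZT_uM : PZ^T *m uM = uM.
Proof.
apply/colP => i; rewrite /PZ /PZ_of /uM !mxE (bigD1 eM) //= !mxE eqxx mulr1.
rewrite big1 ?addr0; last by move=> j nj; rewrite !mxE (negbTE nj) mulr0.
by rewrite (row_abs absorb_eM) (inj_eq (@Some_inj _)).
Qed.

Lemma part1 e : \sum_e2 PX e e2 = 1.
Proof.
have h : PX *m one = one.
  by rewrite /PX /PX_of -/C -mulmxA invC_one -/PZ -mulmxA PZT_uM CuM.
have := congr1 (fun A : 'cV[R]_n.+1 => A e 0) h; rewrite /one !mxE => <-.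
by apply: eq_bigr => j _; rewrite [const_mx _ _ _]mxE mulr1.
Qed.


Lemma PXk k : PX ^+ k = C *m (PZ^T ^+ k) *m invmx C.
Proof.
elim: k => [|k IH].
  by rewrite !expr0 mulmx1 mulmxV // C_unit.
rewrite exprSr IH exprSr -!mulmxE /PX /PX_of -/C -/PZ.
by rewrite !mulmxA mulmxKV ?C_unit.
Qed.

Lemma PZTk k : PZ^T ^+ k = (PZ ^+ k)^T.
Proof.
elim: k => [|k IH]; first by rewrite !expr0 trmx1.
by rewrite exprS IH exprSr -!mulmxE trmx_mul.
Qed.

Lemma PZk_entry k e' : (PZ ^+ k) e' eM = (invmx C *m PX ^+ k *m C) eM e'.
Proof.
rewrite PXk !mulmxA mulVmx ?C_unit // mul1mx -mulmxA mulVmx ?C_unit // mulmx1 PZTk.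
by rewrite mxE.
Qed.


Lemma PZk_eM k : (PZ ^+ k) eM eM = 1.
Proof.
elim: k => [|k IH]; first by rewrite expr0 mxE eqxx.
rewrite exprS -mulmxE mxE (bigD1 eM) //= IH /PZ /PZ_of mxE absorb_eM mul1r.
rewrite big1 ?addr0 // => j nj.
by rewrite mxE (row_abs absorb_eM) (inj_eq (@Some_inj _)) (negbTE nj) mul0r.
Qed.

Lemma hit_None j : hit_at P' (Some eM) None None j = 0.
Proof. by case: j => [|j]; rewrite ?hit_at0 ?hit_atS //= mul0r. Qed.

Lemma cum_hit k x :
  \sum_(j < k.+1) hit_at P' (Some eM) None (Some x) j = (PZ ^+ k) x eM.
Proof.
elim: k x => [|k IH] x.
  by rewrite big_ord1 hit_at0 expr0 mxE (inj_eq (@Some_inj _)).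
rewrite big_ord_recl hit_at0 (inj_eq (@Some_inj _)).
case: (eqVneq x eM) => [->|nx].
  rewrite PZk_eM big1 ?addr0 // => j _.
  by rewrite hit_atS eqxx mul0r.
rewrite add0r.
under eq_bigr => j _ do rewrite lift0 hit_atS (inj_eq (@Some_inj _)) nx /= mul1r.
rewrite exchange_big /= exprS -mulmxE mxE sum_option big1 ?add0r.
  apply: eq_bigr => y _; rewrite -big_distrr /= IH /PZ /PZ_of mxE //.
by move=> j _; rewrite hit_None mulr0.
Qed.


Lemma sum_invC : \sum_a invmx C eM a = 1.
Proof.
have := congr1 (fun A : 'cV[R]_n.+1 => A eM 0) invC_one.
rewrite /uM /one !mxE eqxx mulr1n => <-.
by apply: eq_bigr => j _; rewrite [const_mx _ _ _]mxE mulr1.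
Qed.

Lemma lim_PZ (pi : 'I_n.+1 -> R)
  (hpi : forall e2 e, seq_lim (fun k => (PX ^+ k) e2 e) (pi e)) e' :
  seq_lim (fun k => (PZ ^+ k) e' eM) (\sum_(e | le e e') pi e).
Proof.
apply: (@seq_lim_ext _ (fun k => \sum_b \sum_a (invmx C eM a * C b e') * (PX ^+ k) a b)).
- apply: seq_lim_sum => b; apply: seq_lim_sum => a; apply: seq_lim_scale; exact: hpi.
- move=> k; rewrite PZk_entry mxE; apply: eq_bigr => b _; rewrite [(_ *m _) _ _]mxE big_distrl.
  by apply: eq_bigr => a _; rewrite mulrAC.
- rewrite [RHS]big_mkcond; apply: eq_bigr => b _.
  rewrite -big_distrl /= -big_distrl /= sum_invC mul1r /C /Cmx mxE.
  by case: (le b e'); rewrite ?mul1r ?mul0r.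
Qed.


Lemma part2 (pi : 'I_n.+1 -> R)
  (hpi : forall e2 e, seq_lim (fun k => (PX ^+ k) e2 e) (pi e)) e' :
  hit_before P' (Some eM) None (Some e') (\sum_(e | le e e') pi e).
Proof.
move=> eps he; case: (lim_PZ hpi e' he) => N HN; exists N.+1 => k hk.
case: k hk => [//|k] hk; rewrite cum_hit; exact: HN.
Qed.

End Main.

Theorem theorem3p1 (R : realFieldType) (n : nat)
  (P' : option 'I_n.+1 -> option 'I_n.+1 -> R) (eM : 'I_n.+1)
  (le : rel 'I_n.+1)
  (P'_nonneg : forall x y, 0 <= P' x y)
  (P'_stoch : forall x, \sum_y P' x y = 1)
  (absorb_inf : P' None None = 1)
  (absorb_eM : P' (Some eM) (Some eM) = 1)
  (le_refl : forall e, le e e)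
  (le_anti : forall e f, le e f -> le f e -> e = f)
  (le_trans : forall e f g, le e f -> le f g -> le e g)
  (eM_max : forall e, le eM e -> e = eM)
  (eM_unique_max : forall m, (forall e, le m e -> e = m) -> m = eM) :
  (forall e, \sum_e2 (PX_of le P') e e2 = 1) /\
  (forall pi : 'I_n.+1 -> R,
     \sum_e pi e = 1 ->
     (forall e2 e, seq_lim (fun k => ((PX_of le P') ^+ k) e2 e) (pi e)) ->
     forall e', hit_before P' (Some eM) None (Some e')
                           (\sum_(e | le e e') pi e)).
Proof.
split.
  move=> e; eapply part1; eassumption.
move=> pi _ hpi e'; eapply part2; eassumption.
Qed.
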